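(* If $\Gamma$ is a connected mutation-finite graph with at least $4$ vertices, then every connected subgraph of $\Gamma$ with $3$ vertices is of type $\mathbf{A}_3$ or $\widehat{\mathbf{A}}_2$, i.e. is isomorphic to one of the following six graphs on vertices $1,2,3$ (all arrows single unless stated): $1\to2\to3$; $2\to1$ and $2\to3$; $1\to2$ and $3\to2$; $1\to2\to3\to1$; $1\to2\to3$ and $1\to3$; $1\to2\to3$ together with two arrows $3\to1$.
   Context: A graph here is a finite directed multigraph with no loops and no oriented $2$-cycles; multiple arrows in the same direction are allowed. The mutation $\mu_k\Gamma$ at a vertex $k$: for every pair of arrows $i\to k$, $k\to j$ add an arrow $i\to j$; reverse all arrows incident to $k$; then delete pairs of opposite arrows $i\to j$, $j\to i$ until no oriented $2$-cycles remain. $\Gamma$ is mutation-finite if only finitely many isomorphism classes of graphs are obtainable from it by sequences of mutations. Connected means the underlying undirected graph is connected. Subgraph always means full (induced) subgraph: a subset of the vertices with all arrows between them. *)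

(* Defs.v *)
From mathcomp Require Import all_boot all_order all_fingroup.
Set Implicit Arguments. Unset Strict Implicit. Unset Printing Implicit Defensive.

(* A graph on the vertex set 'I_n is given by its arrow counts:
   arr G i j = number of arrows i -> j. *)
Definition graph (n : nat) := 'I_n -> 'I_n -> nat.

Definition is_graph n (G : graph n) : Prop :=
  (forall i, G i i = 0) /\ (forall i j, (G i j == 0) || (G j i == 0)).

(* mutation at k, exactly as described: add i->j for each path i->k->j,
   reverse arrows at k, then cancel opposite pairs *)
Definition mutate n (k : 'I_n) (G : graph n) : graph n :=
  fun i j =>
    if (i == k) then G j i
    else if (j == k) then G k i
    else (G i j + G i k * G k j) - (G j i + G j k * G k i).

Definition mutate_seq n (ks : seq 'I_n) (G : graph n) : graph n :=
  foldl (fun H k => mutate k H) G ks.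

Definition graph_iso n (G H : graph n) : Prop :=
  exists s : {perm 'I_n}, forall i j, G (s i) (s j) = H i j.

Definition mutation_finite n (G : graph n) : Prop :=
  exists (m : nat) (L : 'I_m -> graph n),
    forall ks : seq 'I_n, exists t : 'I_m, graph_iso (mutate_seq ks G) (L t).

Definition adj n (G : graph n) : rel 'I_n :=
  fun i j => (0 < G i j) || (0 < G j i).
Definition connected n (G : graph n) : Prop :=
  forall i j : 'I_n, connect (adj G) i j.

Definition induced n m (G : graph n) (f : 'I_m -> 'I_n) : graph m :=
  fun i j => G (f i) (f j).

(* graphs on vertices {1,2,3}, encoded as ordinals 0,1,2 *)
Definition mk3 (l : seq (nat * nat * nat)) : graph 3 :=
  fun i j => \sum_(e <- l | (e.1.1 == i.+1) && (e.1.2 == j.+1)) e.2.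

(* the six graphs of type A_3 or affine A_2 (triples: source, target, multiplicity) *)
Definition A3_1 := mk3 [:: (1,2,1); (2,3,1)].
Definition A3_2 := mk3 [:: (2,1,1); (2,3,1)].
Definition A3_3 := mk3 [:: (1,2,1); (3,2,1)].
Definition A3_4 := mk3 [:: (1,2,1); (2,3,1); (3,1,1)].
Definition tA2_1 := mk3 [:: (1,2,1); (2,3,1); (1,3,1)].
Definition tA2_2 := mk3 [:: (1,2,1); (2,3,1); (3,1,2)].

Definition type_A3_or_affA2 (H : graph 3) : Prop :=
  graph_iso H A3_1 \/ graph_iso H A3_2 \/ graph_iso H A3_3 \/
  graph_iso H A3_4 \/ graph_iso H tA2_1 \/ graph_iso H tA2_2.

(* Main.v *)
Require Import Defs.
From mathcomp Require Import all_boot all_order all_fingroup.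
From mathcomp Require Import zify.
From Stdlib Require Import FunctionalExtensionality.
Set Implicit Arguments. Unset Strict Implicit. Unset Printing Implicit Defensive.

Definition unbounded n (G : graph n) : Prop :=
  forall B, exists ks i j, B <= mutate_seq ks G i j.

Lemma mf_bounded n (G : graph n) : mutation_finite G -> ~ unbounded G.
Proof.
case=> m [L HL] U.
pose B := \max_(t < m) \max_(i < n) \max_(j < n) L t i j.
case: (U B.+1) => ks [i [j hij]].
case: (HL ks) => t [s hs].
have e : mutate_seq ks G i j = L t (s^-1 i)%g (s^-1 j)%g.
  by rewrite -hs !permKV.
move: hij; rewrite e => hij.
have : L t (s^-1 i)%g (s^-1 j)%g <= B.
  apply: (leq_trans _ (leq_bigmax t)).
  apply: (leq_trans _ (leq_bigmax (s^-1 i)%g)).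
  exact: (leq_bigmax (s^-1 j)%g).
by rewrite leqNgt hij.
Qed.

Lemma unb_mut n (G : graph n) k : unbounded (mutate k G) -> unbounded G.
Proof. move=> U B; case: (U B) => ks [i [j h]]; by exists (k :: ks), i, j. Qed.

Definition cyc n (G : graph n) x y z a b c : Prop :=
  [/\ x != y, y != z, z != x, G x y = a & G y z = b] /\
  [/\ G z x = c, G y x = 0, G z y = 0 & G x z = 0].

Lemma cyc_rot n (G : graph n) x y z a b c : cyc G x y z a b c -> cyc G y z x b c a.
Proof. by case=> [[? ? ? ? ?] [? ? ? ?]]; split; split. Qed.

Lemma neqF (T : eqType) (x y : T) : x != y -> (x == y) = false /\ (y == x) = false.
Proof. by move=> h; rewrite (negbTE h) eq_sym (negbTE h). Qed.

Lemma cyc_step n (G : graph n) x y z a b c : cyc G x y z a b c -> c <= a * b ->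
  cyc (mutate y G) x z y (a * b - c) b a.
Proof.
case=> [[xy yz zx e1 e2] [e3 e4 e5 e6]] hc.
case: (neqF xy) => f1 f2; case: (neqF yz) => f3 f4; case: (neqF zx) => f5 f6.
rewrite /cyc /mutate !eqxx ?f1 ?f2 ?f3 ?f4 ?f5 ?f6 ?e1 ?e2 ?e3 ?e4 ?e5 ?e6.
split; split => //; try by rewrite eq_sym.
all: lia.
Qed.

Lemma arith1 a b c : 2 <= a -> 2 <= b -> 2 <= c -> 7 <= a + b + c -> c <= a -> c <= b ->
  maxn a (maxn b c) < a * b - c.
Proof. move=> *; nia. Qed.

Lemma growthN N : forall n (G : graph n) x y z a b c, cyc G x y z a b c ->
  2 <= a -> 2 <= b -> 2 <= c -> 7 <= a + b + c ->
  exists ks i j, N + maxn a (maxn b c) <= mutate_seq ks G i j.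
Proof.
elim: N => [|N IH] n G x y z a b c cy ha hb hc hs.
  case: (cy) => [[_ _ _ e1 e2] [e3 _ _ _]].
  exists [::].
  have : maxn a (maxn b c) = a \/ maxn a (maxn b c) = b \/ maxn a (maxn b c) = c by lia.
  case=> [->|[->|->]]; [exists x, y | exists y, z | exists z, x]; by rewrite /= ?e1 ?e2 ?e3.
have key : forall n (G : graph n) x y z a b c, cyc G x y z a b c ->
  2 <= a -> 2 <= b -> 2 <= c -> 7 <= a + b + c -> c <= a -> c <= b ->
  exists ks i j, N.+1 + maxn a (maxn b c) <= mutate_seq ks G i j.
  move=> m H u v w p q r cy' hp hq hr hs' h1 h2.
  have ar := arith1 hp hq hr hs' h1 h2.
  have cy2 := cyc_step cy' (ltac:(nia) : r <= p * q).
  case: (IH _ _ _ _ _ _ _ _ cy2 ltac:(lia) hq hp ltac:(lia)) => ks [i [j hh]].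
  exists (v :: ks), i, j => /=.
  move: hh; set d := p * q - r => hh; lia.
have : (c <= a /\ c <= b) \/ (a <= b /\ a <= c) \/ (b <= a /\ b <= c) by lia.
case=> [[h1 h2]|[[h1 h2]|[h1 h2]]].
- exact: key cy ha hb hc hs h1 h2.
- case: (key _ _ _ _ _ _ _ _ (cyc_rot cy) hb hc ha ltac:(lia) h1 h2) => ks [i [j hh]].
  exists ks, i, j; move: hh; lia.
- case: (key _ _ _ _ _ _ _ _ (cyc_rot (cyc_rot cy)) hc ha hb ltac:(lia) h2 h1) => ks [i [j hh]].
  exists ks, i, j; move: hh; lia.
Qed.

Lemma growth n (G : graph n) x y z a b c : cyc G x y z a b c ->
  2 <= a -> 2 <= b -> 2 <= c -> 7 <= a + b + c -> unbounded G.
Proof.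
move=> cy ha hb hc hs B.
case: (growthN B cy ha hb hc hs) => ks [i [j h]]; exists ks, i, j; lia.
Qed.


Lemma R1 n (G : graph n) x y z a b c : cyc G x y z a b c -> 2 <= a -> b = 1 -> 2 <= c ->
  unbounded G.
Proof.
move=> cy ha hb hc; subst b.
have cy2 := cyc_step (cyc_rot (cyc_rot cy)) (ltac:(nia) : 1 <= c * a).
apply: (unb_mut (k := x)); apply: (growth cy2); nia.
Qed.

Lemma R2 n (G : graph n) x y z a b c : cyc G x y z a b c -> a = 1 -> b = 1 -> 3 <= c ->
  unbounded G.
Proof.
move=> cy ha hb hc; subst a b.
have cy2 := cyc_step (cyc_rot (cyc_rot cy)) (ltac:(nia) : 1 <= c * 1).
apply: (unb_mut (k := x)); apply: (R1 cy2); lia.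
Qed.

Lemma cycgen n (G : graph n) x y z a b c : cyc G x y z a b c -> 1 <= a -> 1 <= b -> 1 <= c ->
  ((a = 1 /\ b = 1 /\ c = 1) \/ (a = 1 /\ b = 1 /\ c = 2) \/ (a = 1 /\ b = 2 /\ c = 1) \/
      (a = 2 /\ b = 1 /\ c = 1) \/ (a = 2 /\ b = 2 /\ c = 2)) \/ unbounded G.
Proof.
move=> cy ha hb hc.
have : (2 <= a /\ 2 <= b /\ 2 <= c) \/ (a = 1 /\ 2 <= b /\ 2 <= c) \/ (2 <= a /\ b = 1 /\ 2 <= c)
  \/ (2 <= a /\ 2 <= b /\ c = 1) \/ (a = 1 /\ b = 1) \/ (b = 1 /\ c = 1) \/ (a = 1 /\ c = 1) by lia.
case=> [[h1 [h2 h3]]|[[h1 [h2 h3]]|[[h1 [h2 h3]]|[[h1 [h2 h3]]|[[h1 h2]|[[h1 h2]|[h1 h2]]]]]]].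
- have [h4|h4] : 7 <= a + b + c \/ (a = 2 /\ b = 2 /\ c = 2) by lia.
  + by right; exact: growth cy h1 h2 h3 h4.
  + by left; tauto.
- by right; apply: (R1 (cyc_rot (cyc_rot cy))).
- by right; apply: (R1 cy).
- by right; apply: (R1 (cyc_rot cy)).
- have [h4|h4] : 3 <= c \/ c = 1 \/ c = 2 by lia.
  + by right; apply: (R2 cy).
  + by left; case: h4 => h4; subst; tauto.
- have [h4|h4] : 3 <= a \/ a = 1 \/ a = 2 by lia.
  + by right; apply: (R2 (cyc_rot cy)).
  + by left; case: h4 => h4; subst; tauto.
- have [h4|h4] : 3 <= b \/ b = 1 \/ b = 2 by lia.
  + by right; apply: (R2 (cyc_rot (cyc_rot cy))).
  + by left; case: h4 => h4; subst; tauto.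
Qed.

Lemma CYC n (H : graph n) u v t : u != v -> v != t -> u != t ->
  0 < H u v -> 0 < H v t -> 0 < H t u -> H v u = 0 -> H t v = 0 -> H u t = 0 ->
  (H u v = 1 /\ H v t = 1 /\ H t u = 1) \/ (H u v = 1 /\ H v t = 1 /\ H t u = 2) \/
  (H u v = 1 /\ H v t = 2 /\ H t u = 1) \/ (H u v = 2 /\ H v t = 1 /\ H t u = 1) \/
  cyc H u v t 2 2 2 \/ unbounded H.
Proof.
move=> d1 d2 d3 p1 p2 p3 z1 z2 z3.
have cy : cyc H u v t (H u v) (H v t) (H t u) by split; split; rewrite // eq_sym.
case: (cycgen cy p1 p2 p3) => [[h|[h|[h|[h|h]]]]|h]; try tauto.
do 4 right; left; case: h => h1 [h2 h3].
by move: cy; rewrite h1 h2 h3.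
Qed.

Lemma ATP n (H : graph n) u v t : u != v -> v != t -> u != t ->
  0 < H u v -> 0 < H v t -> H v u = 0 -> H t v = 0 -> H t u = 0 ->
  (H u v = 1 /\ H v t = 1 /\ H u t <= 1) \/ unbounded H.
Proof.
move=> d1 d2 d3 p1 p2 z1 z2 z3.
case: (neqF d1) => f1 f2; case: (neqF d2) => f3 f4; case: (neqF d3) => f5 f6.
have cy : cyc (mutate v H) u t v (H u v * H v t + H u t) (H v t) (H u v).
{ rewrite /cyc /mutate !eqxx ?f1 ?f2 ?f3 ?f4 ?f5 ?f6 ?z1 ?z2 ?z3.
    split; split => //; try by rewrite eq_sym.
    all: lia. }
case: (cycgen cy ltac:(nia) p2 p1) => [h|h]; last by right; exact: unb_mut h.
left; case: h => [|[|[|[|]]]] [h1 [h2 h3]]; rewrite h2 h3; move: h1; rewrite h2 h3; lia.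
Qed.

Lemma SRC n (H : graph n) u v t : u != v -> v != t -> u != t ->
  0 < H v u -> 0 < H v t -> H u v = 0 -> H t v = 0 -> H u t = 0 -> H t u = 0 ->
  (H v u = 1 /\ H v t = 1) \/ unbounded H.
Proof.
move=> d1 d2 d3 p1 p2 z1 z2 z3 z4.
case: (neqF d1) => f1 f2; case: (neqF d2) => f3 f4; case: (neqF d3) => f5 f6.
have e1 : mutate u H u v = H v u by rewrite /mutate ?eqxx ?f1 ?f2 ?f3 ?f4 ?f5 ?f6 ?z1 ?z2 ?z3 ?z4 ?p1 ?p2; lia.
have e2 : mutate u H v t = H v t by rewrite /mutate ?eqxx ?f1 ?f2 ?f3 ?f4 ?f5 ?f6 ?z1 ?z2 ?z3 ?z4 ?p1 ?p2; lia.
have e3 : mutate u H v u = 0 by rewrite /mutate ?eqxx ?f1 ?f2 ?f3 ?f4 ?f5 ?f6 ?z1 ?z2 ?z3 ?z4 ?p1 ?p2; lia.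
have e4 : mutate u H t v = 0 by rewrite /mutate ?eqxx ?f1 ?f2 ?f3 ?f4 ?f5 ?f6 ?z1 ?z2 ?z3 ?z4 ?p1 ?p2; lia.
have e5 : mutate u H t u = 0 by rewrite /mutate ?eqxx ?f1 ?f2 ?f3 ?f4 ?f5 ?f6 ?z1 ?z2 ?z3 ?z4 ?p1 ?p2; lia.
case: (ATP (H := mutate u H) d1 d2 d3); rewrite ?e1 ?e2 ?e3 ?e4 ?e5 //.
  by move=> [h1 [h2 _]]; left.
by right; exact: unb_mut.
Qed.

Lemma SNK n (H : graph n) u v t : u != v -> v != t -> u != t ->
  0 < H u v -> 0 < H t v -> H v u = 0 -> H v t = 0 -> H u t = 0 -> H t u = 0 ->
  (H u v = 1 /\ H t v = 1) \/ unbounded H.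
Proof.
move=> d1 d2 d3 p1 p2 z1 z2 z3 z4.
case: (neqF d1) => f1 f2; case: (neqF d2) => f3 f4; case: (neqF d3) => f5 f6.
have e1 : mutate t H u v = H u v by rewrite /mutate ?eqxx ?f1 ?f2 ?f3 ?f4 ?f5 ?f6 ?z1 ?z2 ?z3 ?z4 ?p1 ?p2; lia.
have e2 : mutate t H v t = H t v by rewrite /mutate ?eqxx ?f1 ?f2 ?f3 ?f4 ?f5 ?f6 ?z1 ?z2 ?z3 ?z4 ?p1 ?p2; lia.
have e3 : mutate t H v u = 0 by rewrite /mutate ?eqxx ?f1 ?f2 ?f3 ?f4 ?f5 ?f6 ?z1 ?z2 ?z3 ?z4 ?p1 ?p2; lia.
have e4 : mutate t H t v = 0 by rewrite /mutate ?eqxx ?f1 ?f2 ?f3 ?f4 ?f5 ?f6 ?z1 ?z2 ?z3 ?z4 ?p1 ?p2; lia.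
have e5 : mutate t H t u = 0 by rewrite /mutate ?eqxx ?f1 ?f2 ?f3 ?f4 ?f5 ?f6 ?z1 ?z2 ?z3 ?z4 ?p1 ?p2; lia.
case: (ATP (H := mutate t H) d1 d2 d3); rewrite ?e1 ?e2 ?e3 ?e4 ?e5 //.
  by move=> [h1 [h2 _]]; left.
by right; exact: unb_mut.
Qed.


Lemma gzero n (G : graph n) i j : is_graph G -> 0 < G i j -> G j i = 0.
Proof. case=> _ h p; case/orP: (h i j) => /eqP; lia. Qed.

Lemma tri n (G : graph n) i j : is_graph G ->
  (G i j = 0 /\ G j i = 0) \/ (0 < G i j /\ G j i = 0) \/ (G i j = 0 /\ 0 < G j i).
Proof. case=> _ h; case/orP: (h i j) => /eqP; lia. Qed.

Ltac close := first [ assumption | by rewrite eq_sym | lia ].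

Lemma MK n (G : graph n) x y z w : is_graph G -> cyc G x y z 2 2 2 ->
  w != x -> w != y -> w != z -> (0 < G x w) || (0 < G w x) -> unbounded G.
Proof.
move=> gG cy wx wy wz; case: (cy) => [[xy yz zx e1 e2] [e3 e4 e5 e6]].
case/orP => p.
- have q := gzero gG p.
  case: (tri y w gG) => [[r1 r2]|[[r1 r2]|[r1 r2]]].
  + have [[h _]|//] : (G x y = 1 /\ G x w = 1) \/ unbounded G by apply: SRC; close.
    lia.
  + have [[h _]|//] : (G x y = 1 /\ G y w = 1 /\ G x w <= 1) \/ unbounded G by apply: ATP; close.
    lia.
  + have [[_ [_ h]]|//] : (G x w = 1 /\ G w y = 1 /\ G x y <= 1) \/ unbounded G by apply: ATP; close.
    lia.
- have q := gzero gG p.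
  case: (tri z w gG) => [[r1 r2]|[[r1 r2]|[r1 r2]]].
  + have [[h _]|//] : (G z x = 1 /\ G w x = 1) \/ unbounded G by apply: SNK; close.
    lia.
  + have [[_ [_ h]]|//] : (G z w = 1 /\ G w x = 1 /\ G z x <= 1) \/ unbounded G by apply: ATP; close.
    lia.
  + have [[_ [h _]]|//] : (G w z = 1 /\ G z x = 1 /\ G w x <= 1) \/ unbounded G by apply: ATP; close.
    lia.
Qed.

Lemma exit (T : finType) (e : rel T) (S : {set T}) a b : connect e a b -> a \in S -> b \notin S ->
  exists u v, [/\ u \in S, v \notin S & e u v].
Proof.
move/connectP => [p pth ->]; elim: p a pth => [|c p IH] a /=.
  by move=> _ h1; rewrite h1.
case/andP => eac pth ha hl; case: (boolP (c \in S)) => hc.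
  exact: IH pth hc hl.
by exists a, c.
Qed.

Lemma MK_full n (G : graph n) x y z : is_graph G -> connected G -> 4 <= n ->
  cyc G x y z 2 2 2 -> unbounded G.
Proof.
move=> gG cG n4 cy.
pose S := x |: (y |: [set z]).
have : ~~ ([set: 'I_n] \subset S).
  apply/negP => /subset_leq_card; rewrite cardsT card_ord /S !cardsU1 cards1; lia.
case/subsetPn => w0 _ hw0.
have hx : x \in S by rewrite /S !inE eqxx.
case: (exit (cG x w0) hx hw0) => u [w [hu hw ea]].
move: hw; rewrite /S !inE !negb_or => /and3P [wx wy wz].
move: hu ea; rewrite /S !inE => /or3P [] /eqP -> ea.
- exact: MK gG cy wx wy wz ea.
- exact: MK gG (cyc_rot cy) wy wz wx ea.
- exact: MK gG (cyc_rot (cyc_rot cy)) wz wx wy ea.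
Qed.

Section Res.
Variables (n : nat) (f : 'I_3 -> 'I_n).
Hypothesis finj : injective f.

Lemma mut_res (G : graph n) k : induced (mutate (f k) G) f = mutate k (induced G f).
Proof.
apply: functional_extensionality => i; apply: functional_extensionality => j.
by rewrite /induced /mutate !(inj_eq finj).
Qed.

Lemma res_seq ks : forall G : graph n, induced (mutate_seq (map f ks) G) f = mutate_seq ks (induced G f).
Proof. elim: ks => [|k ks IH] G //=; by rewrite IH mut_res. Qed.

Lemma unb_res (G : graph n) : unbounded (induced G f) -> unbounded G.
Proof.
move=> U B; case: (U B) => ks [i [j h]]; exists (map f ks), (f i), (f j).
by move: h; rewrite -res_seq.
Qed.

Lemma cyc_res (G : graph n) u v t a b c : cyc (induced G f) u v t a b c -> cyc G (f u) (f v) (f t) a b c.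
Proof. by case=> [[? ? ? ? ?] [? ? ? ?]]; split; split; rewrite ?(inj_eq finj). Qed.
End Res.

Definition o0 : 'I_3 := @Ordinal 3 0 isT.
Definition o1 : 'I_3 := @Ordinal 3 1 isT.
Definition o2 : 'I_3 := @Ordinal 3 2 isT.

Lemma E3 (i : 'I_3) : i = o0 \/ i = o1 \/ i = o2.
Proof.
case: i => [[|[|[|m]]] hm]; [left|right;left|right;right|by []]; exact: val_inj.
Qed.

Lemma isoK (H K : graph 3) (u v t : 'I_3) : is_graph H -> u != v -> v != t -> u != t ->
  H u v = K o0 o1 -> H v u = K o1 o0 -> H v t = K o1 o2 -> H t v = K o2 o1 ->
  H t u = K o2 o0 -> H u t = K o0 o2 -> K o0 o0 = 0 -> K o1 o1 = 0 -> K o2 o2 = 0 ->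
  graph_iso H K.
Proof.
move=> [g1 _] d1 d2 d3 h1 h2 h3 h4 h5 h6 k1 k2 k3.
pose g := fun i : 'I_3 => nth u [:: u; v; t] i.
have gi : injective g.
{ move=> i j; case: (E3 i) => [->|[->|->]]; case: (E3 j) => [->|[->|->]] => //; rewrite /g /= => h.
  all: by move: d1 d2 d3; rewrite h ?eqxx. }
exists (perm gi) => i j; rewrite !permE.
by case: (E3 i) => [->|[->|->]]; case: (E3 j) => [->|[->|->]]; rewrite /g /= ?g1.
Qed.


Lemma isolF (H : graph 3) i : is_graph H -> connected H ->
  (forall j, j != i -> H i j = 0 /\ H j i = 0) -> False.
Proof.
move=> [g1 _] cH hz.
have [j ji] : exists j, j != i by case: (E3 i) => [->|[->|->]]; [exists o1|exists o0|exists o0].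
move: (cH i j) => /connectP [p pth lj].
case: p pth lj => [|c p] /=.
  by move=> _ ej; rewrite ej eqxx in ji.
case/andP => ac _ _; move: ac; rewrite /adj.
case: (eqVneq c i) => [->|ci]; first by rewrite g1.
by case: (hz c ci) => -> ->.
Qed.

Ltac kclose := first [ assumption | done |
  (unfold A3_1, A3_2, A3_3, A3_4, tA2_1, tA2_2; rewrite /mk3 unlock /=; lia) ].

Ltac iso_one H K :=
  first [ solve [apply: (@isoK H K o0 o1 o2); kclose]
        | solve [apply: (@isoK H K o0 o2 o1); kclose]
        | solve [apply: (@isoK H K o1 o0 o2); kclose]
        | solve [apply: (@isoK H K o1 o2 o0); kclose]
        | solve [apply: (@isoK H K o2 o0 o1); kclose]
        | solve [apply: (@isoK H K o2 o1 o0); kclose] ].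

Ltac iso_search H := rewrite /type_A3_or_affA2;
  first [ left; iso_one H A3_1 | right; left; iso_one H A3_2
        | right; right; left; iso_one H A3_3 | do 3 right; left; iso_one H A3_4
        | do 4 right; left; iso_one H tA2_1 | do 5 right; iso_one H tA2_2 ].

Ltac tryATP H nU u v t :=
  have [[h1 [h2 h3]]|/nU []] := @ATP 3 H u v t isT isT isT ltac:(assumption) ltac:(assumption)
     ltac:(assumption) ltac:(assumption) ltac:(assumption);
  left; (have [h4|h4] : H u t = 0 \/ H u t = 1 by lia); iso_search H.

Ltac trySRC H nU u v t :=
  have [[h1 h2]|/nU []] := @SRC 3 H u v t isT isT isT ltac:(assumption) ltac:(assumption)
     ltac:(assumption) ltac:(assumption) ltac:(assumption) ltac:(assumption);
  left; iso_search H.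

Ltac trySNK H nU u v t :=
  have [[h1 h2]|/nU []] := @SNK 3 H u v t isT isT isT ltac:(assumption) ltac:(assumption)
     ltac:(assumption) ltac:(assumption) ltac:(assumption) ltac:(assumption);
  left; iso_search H.

Ltac tryCYC H nU u v t :=
  have [[h1 [h2 h3]]|[[h1 [h2 h3]]|[[h1 [h2 h3]]|[[h1 [h2 h3]]|[hm|/nU []]]]]] :=
     @CYC 3 H u v t isT isT isT ltac:(assumption) ltac:(assumption)
     ltac:(assumption) ltac:(assumption) ltac:(assumption) ltac:(assumption);
  [ left; iso_search H | left; iso_search H | left; iso_search H | left; iso_search H
  | right; by exists u, v, t ].

Ltac all6ATP H nU :=
  first [ solve [tryATP H nU o0 o1 o2] | solve [tryATP H nU o0 o2 o1] | solve [tryATP H nU o1 o0 o2]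
        | solve [tryATP H nU o1 o2 o0] | solve [tryATP H nU o2 o0 o1] | solve [tryATP H nU o2 o1 o0] ].

Ltac all6SRC H nU :=
  first [ solve [trySRC H nU o0 o1 o2] | solve [trySRC H nU o0 o2 o1] | solve [trySRC H nU o1 o0 o2]
        | solve [trySRC H nU o1 o2 o0] | solve [trySRC H nU o2 o0 o1] | solve [trySRC H nU o2 o1 o0] ].

Ltac all6SNK H nU :=
  first [ solve [trySNK H nU o0 o1 o2] | solve [trySNK H nU o0 o2 o1] | solve [trySNK H nU o1 o0 o2]
        | solve [trySNK H nU o1 o2 o0] | solve [trySNK H nU o2 o0 o1] | solve [trySNK H nU o2 o1 o0] ].

Ltac all6CYC H nU :=
  first [ solve [tryCYC H nU o0 o1 o2] | solve [tryCYC H nU o0 o2 o1] | solve [tryCYC H nU o1 o0 o2]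
        | solve [tryCYC H nU o1 o2 o0] | solve [tryCYC H nU o2 o0 o1] | solve [tryCYC H nU o2 o1 o0] ].

Ltac disc_rest :=
  let j := fresh "j" in move=> j; case: (E3 j) => [->|[->|->]]; rewrite ?eqxx // => _; split; assumption.

Ltac disc H gH cH := exfalso;
  first [ solve [apply (@isolF H o0 gH cH); disc_rest] | solve [apply (@isolF H o1 gH cH); disc_rest]
        | solve [apply (@isolF H o2 gH cH); disc_rest] ].

Lemma classify3 (H : graph 3) : is_graph H -> ~ unbounded H -> connected H ->
  type_A3_or_affA2 H \/ exists u v t, cyc H u v t 2 2 2.
Proof.
move=> gH nU cH.
case: (tri o0 o1 gH) => [[a1 a2]|[[a1 a2]|[a1 a2]]];
case: (tri o1 o2 gH) => [[b1 b2]|[[b1 b2]|[b1 b2]]];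
case: (tri o2 o0 gH) => [[c1 c2]|[[c1 c2]|[c1 c2]]].
all: first [ solve [disc H gH cH] | all6CYC H nU | all6ATP H nU
           | all6SRC H nU | all6SNK H nU ].
Qed.

Unset Implicit Arguments.

Theorem corollary8 (n : nat) (G : graph n) :
  is_graph G -> connected G -> mutation_finite G -> 4 <= n ->
  forall f : 'I_3 -> 'I_n, injective f -> connected (induced G f) ->
  type_A3_or_affA2 (induced G f).
Proof.
move=> gG cG mf n4 f finj cH.
have gH : is_graph (induced G f) by case: gG => g1 g2; split => [i|i j]; rewrite /induced.
have nU : ~ unbounded (induced G f) := fun u => mf_bounded mf (unb_res finj u).
case: (@classify3 _ gH nU cH) => // [[u [v [t cy]]]].
exfalso; exact: (mf_bounded mf (MK_full gG cG n4 (cyc_res finj cy))).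
Qed.
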